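(* Let $t$ be a term with $\vdash t:A$ in the sub-affine type system for $\lambda_{\text{coin}}$. If $t$ reduces to the distribution $D_1$ and $t$ reduces to the distribution $D_2$, then $D_1\equiv D_2$ (computational equivalence).
   Context: Terms of $\lambda_{\text{coin}}$: $t ::= x \mid \lambda x.t \mid t\,t \mid 1 \mid 0 \mid \mathsf{if}\ t\ \mathsf{then}\ t\ \mathsf{else}\ t \mid \mathsf{coin}$. One-step probabilistic reduction $t\to_p r$: base rules $(\lambda x.t)r \to_1 t[r/x]$, $\mathsf{if}\ 1\ \mathsf{then}\ t\ \mathsf{else}\ u \to_1 t$, $\mathsf{if}\ 0\ \mathsf{then}\ t\ \mathsf{else}\ u \to_1 u$, $\mathsf{coin}\to_{1/2}1$, $\mathsf{coin}\to_{1/2}0$, closed under all contexts (under $\lambda$, both sides of an application, and all three positions of an if-then-else). We write $t\to^*_{q} r$ if $t\to_{p_1}\cdots\to_{p_n} r$ with $q=\prod_i p_i$. A distribution of terms is a finite list $[(p_i,t_i)]_i$; reduction is lifted to distributions by choosing a redex in a term $t$ with one-step reducts $t\to_{q_j}t'_j$ ($\sum_j q_j=1$) and replacing $(p,t)$ by the entries $(pq_j,t'_j)$; a term $t$ reduces to $D$ if $D$ is obtained from $[(1,t)]$ by finitely many such steps. Equality $\sim$ of distributions means they assign the same total probability to each term. Types: $A ::= \mathbb{B} \mid A\to A$. Sub-affine type system (contexts written as $\Gamma,\Delta$ are required to be disjoint): $\Gamma,x:A\vdash x:A$; from $\Gamma,x:A\vdash t:B$ infer $\Gamma\vdash\lambda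 x.t:A\to B$; from $\Gamma\vdash t:A\to B$ and $\Delta\vdash r:A$ infer $\Gamma,\Delta\vdash tr:B$; $\Gamma\vdash 1:\mathbb{B}$, $\Gamma\vdash 0:\mathbb{B}$, $\Gamma\vdash\mathsf{coin}:\mathbb{B}$; from $\Gamma\vdash t:\mathbb{B}$, $\Delta\vdash u:A$, $\Delta\vdash v:A$ infer $\Gamma,\Delta\vdash \mathsf{if}\ t\ \mathsf{then}\ u\ \mathsf{else}\ v:A$ (the two branches share the same context). Elimination contexts: $C ::= \lozenge \mid C\,v$ where $v$ ranges over closed terms in normal form; $C\langle t\rangle$ denotes $C[t/\lozenge]$. $C$ is an elimination context of type $A$, written $C^A$, if for every $t$ with $\vdash t:A$ we have $\vdash C\langle t\rangle:\mathbb{B}$. Computational equivalence: for distributions $D_1=[(p_i,t_i)]_i$ and $D_2=[(q_j,r_j)]_j$ of closed terms of type $A$, $D_1\equiv D_2$ if for every $C^A$, reducing we get $C\langle t_i\rangle\to^*_{u_{ik}} b_{ik}$ and $C\langle r_j\rangle\to^*_{s_{jh}} c_{jh}$ with all $b_{ik},c_{jh}$ in normal form (the $[(u_{ik},b_{ik})]_k$ forming a reduction of $C\langle t_i\rangle$ to a distribution of normal forms, and likewise for $C\langle r_j\rangle$), such that $[(p_iu_{ik},b_{ik})]_{ik}\sim[(q_js_{jh},c_{jh})]_{jh}$. *)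

(* Defs.v *)
From Stdlib Require Import Reals List Arith.
Import ListNotations.
Open Scope R_scope.

Inductive tm : Type :=
| tvar (n : nat)
| tlam (t : tm)
| tapp (t u : tm)
| tone
| tzero
| tite (b t u : tm)
| tcoin.

Definition tm_eq_dec (x y : tm) : {x = y} + {x <> y}.
Proof. decide equality; apply Nat.eq_dec. Defined.

Fixpoint shift (c : nat) (t : tm) : tm :=
  match t with
  | tvar n => if Nat.ltb n c then tvar n else tvar (S n)
  | tlam t => tlam (shift (S c) t)
  | tapp t u => tapp (shift c t) (shift c u)
  | tone => tone
  | tzero => tzero
  | tite b t u => tite (shift c b) (shift c t) (shift c u)
  | tcoin => tcoin
  end.

(* subst k r t = t[r/k], removing variable k (capture-avoiding) *)
Fixpoint subst (k : nat) (r : tm) (t : tm) : tm :=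
  match t with
  | tvar n => if Nat.eqb n k then r
              else if Nat.ltb k n then tvar (pred n) else tvar n
  | tlam t => tlam (subst (S k) (shift 0 r) t)
  | tapp t u => tapp (subst k r t) (subst k r u)
  | tone => tone
  | tzero => tzero
  | tite b t u => tite (subst k r b) (subst k r t) (subst k r u)
  | tcoin => tcoin
  end.

(* ---------- One redex step: a term with the list of all its reducts
   (with probabilities) obtained by contracting one chosen redex. ---------- *)
Definition distr : Type := list (R * tm).

Definition map_tm (f : tm -> tm) (L : distr) : distr :=
  map (fun pt => (fst pt, f (snd pt))) L.

Inductive rstep : tm -> distr -> Prop :=
| rs_beta t r : rstep (tapp (tlam t) r) [(1, subst 0 r t)]
| rs_if1 t u : rstep (tite tone t u) [(1, t)]
| rs_if0 t u : rstep (tite tzero t u) [(1, u)]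
| rs_coin : rstep tcoin [(/2, tone); (/2, tzero)]
| rs_lam t L : rstep t L -> rstep (tlam t) (map_tm tlam L)
| rs_appl t u L : rstep t L -> rstep (tapp t u) (map_tm (fun t' => tapp t' u) L)
| rs_appr t u L : rstep u L -> rstep (tapp t u) (map_tm (fun u' => tapp t u') L)
| rs_ite1 b t u L : rstep b L -> rstep (tite b t u) (map_tm (fun b' => tite b' t u) L)
| rs_ite2 b t u L : rstep t L -> rstep (tite b t u) (map_tm (fun t' => tite b t' u) L)
| rs_ite3 b t u L : rstep u L -> rstep (tite b t u) (map_tm (fun u' => tite b t u') L).

Definition step (t : tm) (p : R) (r : tm) : Prop :=
  exists L, rstep t L /\ In (p, r) L.

Definition normal (t : tm) : Prop := forall p r, ~ step t p r.

Inductive dstep : distr -> distr -> Prop :=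
| ds_intro D1 D2 p t L :
    rstep t L ->
    dstep (D1 ++ (p, t) :: D2)
          (D1 ++ map (fun qt => (p * fst qt, snd qt)) L ++ D2).

Inductive dstar : distr -> distr -> Prop :=
| dstar_refl D : dstar D D
| dstar_step D D' D'' : dstep D D' -> dstar D' D'' -> dstar D D''.

Definition reduces (t : tm) (D : distr) : Prop := dstar [(1, t)] D.

Fixpoint mass (D : distr) (s : tm) : R :=
  match D with
  | [] => 0
  | (p, t) :: D' => (if tm_eq_dec t s then p else 0) + mass D' s
  end.

Definition dist_sim (D1 D2 : distr) : Prop := forall s, mass D1 s = mass D2 s.

Inductive ty : Type :=
| TBool
| TArr (A B : ty).

Definition ctx : Type := list (option ty).

(* G is the disjoint union of G1 and G2 *)
Inductive ctx_split : ctx -> ctx -> ctx -> Prop :=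
| sp_nil : ctx_split [] [] []
| sp_none G G1 G2 : ctx_split G G1 G2 -> ctx_split (None :: G) (None :: G1) (None :: G2)
| sp_left A G G1 G2 : ctx_split G G1 G2 -> ctx_split (Some A :: G) (Some A :: G1) (None :: G2)
| sp_right A G G1 G2 : ctx_split G G1 G2 -> ctx_split (Some A :: G) (None :: G1) (Some A :: G2).

Inductive has_type : ctx -> tm -> ty -> Prop :=
| ht_var G n A : nth_error G n = Some (Some A) -> has_type G (tvar n) A
| ht_lam G t A B : has_type (Some A :: G) t B -> has_type G (tlam t) (TArr A B)
| ht_app G G1 G2 t r A B :
    ctx_split G G1 G2 -> has_type G1 t (TArr A B) -> has_type G2 r A ->
    has_type G (tapp t r) B
| ht_one G : has_type G tone TBool
| ht_zero G : has_type G tzero TBool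
| ht_coin G : has_type G tcoin TBool
| ht_ite G G1 G2 b u v A :
    ctx_split G G1 G2 -> has_type G1 b TBool -> has_type G2 u A -> has_type G2 v A ->
    has_type G (tite b u v) A.

Fixpoint closed_at (k : nat) (t : tm) : Prop :=
  match t with
  | tvar n => (n < k)%nat
  | tlam t => closed_at (S k) t
  | tapp t u => closed_at k t /\ closed_at k u
  | tone | tzero | tcoin => True
  | tite b t u => closed_at k b /\ closed_at k t /\ closed_at k u
  end.

(* C = (... ((hole v1) v2) ... vn) represented by [v1; ...; vn] *)
Definition ectx : Type := list tm.
Definition plug (C : ectx) (t : tm) : tm := fold_left tapp C t.

Definition elim_ctx_of (A : ty) (C : ectx) : Prop :=
  Forall (fun v => closed_at 0 v /\ normal v) C /\
  (forall t, has_type [] t A -> has_type [] (plug C t) TBool).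

Inductive nf_expand (C : ectx) : distr -> distr -> Prop :=
| nfe_nil : nf_expand C [] []
| nfe_cons p t D N E :
    reduces (plug C t) N ->
    Forall (fun bt => normal (snd bt)) N ->
    nf_expand C D E ->
    nf_expand C ((p, t) :: D) (map (fun ub => (p * fst ub, snd ub)) N ++ E).

Definition comp_equiv (A : ty) (D1 D2 : distr) : Prop :=
  Forall (fun pt => has_type [] (snd pt) A) D1 /\
  Forall (fun pt => has_type [] (snd pt) A) D2 /\
  forall C, elim_ctx_of A C ->
    exists E1 E2, nf_expand C D1 E1 /\ nf_expand C D2 E2 /\ dist_sim E1 E2.

(* Main.v *)
Require Import Defs.
From Stdlib Require Import Reals List.
From Stdlib Require Import Lia Lra Arith PeanoNat FunctionalExtensionality ProofIrrelevance Eqdep_dec.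
Import ListNotations.

Open Scope R_scope.

Definition scale (p : R) (qt : R * tm) : R * tm := (p * fst qt, snd qt).

Lemma dstep_app_r D D' E : dstep D D' -> dstep (D ++ E) (D' ++ E).
Proof.
  intros H; inversion H; subst.
  replace ((D1 ++ (p, t) :: D2) ++ E) with (D1 ++ (p, t) :: (D2 ++ E)) by (rewrite <- app_assoc; reflexivity).
  replace ((D1 ++ map (fun qt => (p * fst qt, snd qt)) L ++ D2) ++ E)
    with (D1 ++ map (fun qt => (p * fst qt, snd qt)) L ++ (D2 ++ E)) by (rewrite <- !app_assoc; reflexivity).
  constructor; auto.
Qed.

Lemma dstep_app_l D D' E : dstep D D' -> dstep (E ++ D) (E ++ D').
Proof.
  intros H; inversion H; subst.
  replace (E ++ D1 ++ map (fun qt => (p * fst qt, snd qt)) L ++ D2)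
    with ((E ++ D1) ++ map (fun qt => (p * fst qt, snd qt)) L ++ D2) by (rewrite <- !app_assoc; reflexivity).
  rewrite app_assoc. constructor; auto.
Qed.

Lemma dstar_trans D D' D'' : dstar D D' -> dstar D' D'' -> dstar D D''.
Proof. induction 1; intros; auto. econstructor; eauto. Qed.

Lemma dstar_app_r D D' E : dstar D D' -> dstar (D ++ E) (D' ++ E).
Proof. induction 1. constructor. econstructor. apply dstep_app_r; eauto. auto. Qed.

Lemma dstar_app_l D D' E : dstar D D' -> dstar (E ++ D) (E ++ D').
Proof. induction 1. constructor. econstructor. apply dstep_app_l; eauto. auto. Qed.

Lemma dstep_scale p D D' : dstep D D' -> dstep (map (scale p) D) (map (scale p) D').
Proof.
  intros H; inversion H; subst.
  rewrite !map_app. simpl.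
  replace (map (scale p) (map (fun qt : R * tm => (p0 * fst qt, snd qt)) L))
    with (map (fun qt : R * tm => (p * p0 * fst qt, snd qt)) L).
  - unfold scale at 2; simpl. constructor; auto.
  - rewrite map_map. apply map_ext. intros [a b]. unfold scale; simpl. f_equal. ring.
Qed.

Lemma dstar_scale p D D' : dstar D D' -> dstar (map (scale p) D) (map (scale p) D').
Proof. induction 1. constructor. econstructor. apply dstep_scale; eauto. auto. Qed.

Lemma dstar_combine (Q : tm -> Prop) D :
  Forall (fun pt => exists N, dstar [(1, snd pt)] N /\ Forall (fun qt => Q (snd qt)) N) D ->
  exists E, dstar D E /\ Forall (fun qt => Q (snd qt)) E.
Proof.
  induction D as [|[p t] D IH]; intros HF.
  - exists []. split; constructor.
  - inversion HF; subst. destruct H1 as [N [HN HQ]]. destruct (IH H2) as [E [HE HQE]].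
    exists (map (scale p) N ++ E). split.
    + apply dstar_trans with (map (scale p) N ++ D).
      * change ((p, t) :: D) with ([(p, t)] ++ D). apply dstar_app_r.
        replace [(p, t)] with (map (scale p) [(1, t)]).
        apply dstar_scale; auto. unfold scale; simpl. rewrite Rmult_1_r. reflexivity.
      * apply dstar_app_l; auto.
    + apply Forall_app; split; auto. apply Forall_map. eapply Forall_impl; [|exact HQ].
      intros [a b]; simpl; auto.
Qed.

Definition plug_map (C : ectx) (D : distr) : distr := map_tm (plug C) D.

Lemma map_tm_map_tm f g L : map_tm f (map_tm g L) = map_tm (fun x => f (g x)) L.
Proof. unfold map_tm. rewrite map_map. reflexivity. Qed.

Lemma map_tm_id L : map_tm (fun x => x) L = L.
Proof. induction L as [|[a b] L IH]; simpl; auto. unfold map_tm in *; simpl; rewrite IH; auto. Qed.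

Lemma rstep_plug C : forall t L, rstep t L -> rstep (plug C t) (map_tm (plug C) L).
Proof.
  induction C as [|v C IH]; intros t L H.
  - unfold plug; simpl. rewrite map_tm_id. auto.
  - change (plug (v :: C) t) with (plug C (tapp t v)).
    replace (map_tm (plug (v :: C)) L) with (map_tm (plug C) (map_tm (fun t' => tapp t' v) L)).
    + apply IH. constructor; auto.
    + rewrite map_tm_map_tm. reflexivity.
Qed.

Lemma dstep_plug C D D' : dstep D D' -> dstep (map_tm (plug C) D) (map_tm (plug C) D').
Proof.
  intros H; inversion H; subst. unfold map_tm. rewrite !map_app. simpl.
  replace (map (fun pt : R * tm => (fst pt, plug C (snd pt))) (map (fun qt : R * tm => (p * fst qt, snd qt)) L))
    with (map (fun qt : R * tm => (p * fst qt, snd qt)) (map_tm (plug C) L)).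
  - constructor. apply rstep_plug; auto.
  - unfold map_tm; rewrite !map_map. apply map_ext. intros [a b]; reflexivity.
Qed.

Lemma dstar_plug C D D' : dstar D D' -> dstar (map_tm (plug C) D) (map_tm (plug C) D').
Proof. induction 1. constructor. econstructor. apply dstep_plug; eauto. auto. Qed.

Fixpoint tot (D : distr) : R := match D with [] => 0 | (p, _) :: D => p + tot D end.

Lemma tot_app D E : tot (D ++ E) = tot D + tot E.
Proof. induction D as [|[a b] D IH]; simpl; [ring| rewrite IH; ring]. Qed.

Lemma tot_map_tm f L : tot (map_tm f L) = tot L.
Proof. induction L as [|[a b] L IH]; simpl; auto. unfold map_tm in *; simpl; rewrite IH; auto. Qed.

Lemma tot_scale p L : tot (map (fun qt : R * tm => (p * fst qt, snd qt)) L) = p * tot L.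
Proof. induction L as [|[a b] L IH]; simpl; [ring| rewrite IH; ring]. Qed.

Lemma tot_rstep t L : rstep t L -> tot L = 1.
Proof. induction 1; simpl; try rewrite tot_map_tm; auto; try lra. Qed.

Lemma tot_dstep D D' : dstep D D' -> tot D' = tot D.
Proof.
  intros H; inversion H; subst. rewrite !tot_app. simpl. rewrite ?tot_app, tot_scale.
  rewrite (tot_rstep _ _ H0). ring.
Qed.

Lemma tot_dstar D D' : dstar D D' -> tot D' = tot D.
Proof. induction 1; auto. rewrite IHdstar. apply tot_dstep; auto. Qed.

Lemma mass_app D E s : mass (D ++ E) s = mass D s + mass E s.
Proof. induction D as [|[a b] D IH]; simpl; [ring| rewrite IH; ring]. Qed.

Lemma mass_scale p L s : mass (map (fun qt : R * tm => (p * fst qt, snd qt)) L) s = p * mass L s.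
Proof. induction L as [|[a b] L IH]; simpl; [ring| rewrite IH; destruct tm_eq_dec; ring]. Qed.

Open Scope nat_scope.

Lemma split_len G G1 G2 : ctx_split G G1 G2 -> length G1 = length G /\ length G2 = length G.
Proof. induction 1; simpl; lia. Qed.

Lemma split_sym G G1 G2 : ctx_split G G1 G2 -> ctx_split G G2 G1.
Proof. induction 1; constructor; auto. Qed.

Lemma split_l G G1 G2 n A : ctx_split G G1 G2 -> nth_error G1 n = Some (Some A) ->
  nth_error G n = Some (Some A) /\ nth_error G2 n = Some None.
Proof.
  intros H; revert n; induction H; intros [|n] Hn; simpl in *; try discriminate; auto;
  inversion Hn; subst; auto.
Qed.

Lemma split_r G G1 G2 n A : ctx_split G G1 G2 -> nth_error G2 n = Some (Some A) ->
  nth_error G n = Some (Some A) /\ nth_error G1 n = Some None.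
Proof. intros H; apply split_l; apply split_sym; auto. Qed.

Lemma split_G G G1 G2 n A : ctx_split G G1 G2 -> nth_error G n = Some (Some A) ->
  (nth_error G1 n = Some (Some A) /\ nth_error G2 n = Some None) \/
  (nth_error G2 n = Some (Some A) /\ nth_error G1 n = Some None).
Proof.
  intros H; revert n; induction H; intros [|n] Hn; simpl in *; try discriminate; auto;
  inversion Hn; subst; auto.
Qed.

Fixpoint insl (k : nat) (o : option ty) (G : ctx) : ctx :=
  match k, G with
  | 0, _ => o :: G
  | S k, [] => [o]
  | S k, x :: G => x :: insl k o G
  end.

Lemma nth_insl k o G n : k <= length G ->
  nth_error (insl k o G) n =
  if Nat.ltb n k then nth_error G n else if Nat.eqb n k then Some o else nth_error G (pred n).
Proof.
  revert G n; induction k; intros G n Hk.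
  - destruct n; simpl; auto.
  - destruct G as [|x G]; simpl in Hk; [lia|].
    destruct n; simpl; auto. rewrite IHk by lia.
    destruct (Nat.ltb_spec n k), (Nat.ltb_spec (S n) (S k)), (Nat.eqb_spec n k), (Nat.eqb_spec (S n) (S k));
      try lia; auto.
    destruct n; simpl; auto. lia.
Qed.

Lemma insl_len k o G : k <= length G -> length (insl k o G) = S (length G).
Proof. revert G; induction k; intros [|x G] H; simpl in *; try lia; auto. rewrite IHk; lia. Qed.

Lemma split_ins k G G1 G2 : ctx_split G G1 G2 -> k <= length G ->
  ctx_split (insl k None G) (insl k None G1) (insl k None G2).
Proof.
  revert G G1 G2; induction k; intros G G1 G2 H Hk; simpl.
  - constructor; auto.
  - inversion H; subst; simpl in *; try lia; constructor; apply IHk; auto; lia.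
Qed.

Lemma split_ins_inv k o G Ga Gb : ctx_split (insl k o G) Ga Gb -> k <= length G ->
  exists Ha Hb oa ob, Ga = insl k oa Ha /\ Gb = insl k ob Hb /\ ctx_split G Ha Hb /\
   ((o = None /\ oa = None /\ ob = None) \/ (exists A, o = Some A /\ oa = Some A /\ ob = None) \/
    (exists A, o = Some A /\ oa = None /\ ob = Some A)).
Proof.
  revert G Ga Gb; induction k; intros G Ga Gb H Hk; simpl in H.
  - inversion H; subst.
    + exists G1, G2, None, None; repeat split; auto.
    + exists G1, G2, (Some A), None; repeat split; eauto 10.
    + exists G1, G2, None, (Some A); repeat split; eauto 10.
  - destruct G as [|x G]; simpl in Hk; [lia|].
    inversion H; subst; match goal with Hs : ctx_split (insl _ _ _) _ _ |- _ =>
      destruct (IHk _ _ _ Hs ltac:(lia)) as (Ha & Hb & oa & ob & E1 & E2 & HS & HO) end; subst.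
    + exists (None :: Ha), (None :: Hb), oa, ob; repeat split; auto; constructor; auto.
    + exists (Some A :: Ha), (None :: Hb), oa, ob; repeat split; auto; constructor; auto.
    + exists (None :: Ha), (Some A :: Hb), oa, ob; repeat split; auto; constructor; auto.
Qed.

Lemma split_assoc G0 G1 G2 Ha Hb : ctx_split G0 G1 G2 -> ctx_split G1 Ha Hb ->
  exists G0a, ctx_split G0 G0a Hb /\ ctx_split G0a Ha G2.
Proof.
  intros H; revert Ha Hb; induction H; intros Ha Hb H'; inversion H'; subst;
  try (exists []; split; constructor; fail);
  match goal with Hs : ctx_split _ _ _, IH : forall _ _, ctx_split _ _ _ -> _ |- _ =>
    destruct (IH _ _ Hs) as [X [X1 X2]] end.
  - exists (None :: X); split; constructor; auto.
  - exists (Some A :: X); split; constructor; auto.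
  - exists (None :: X); split; constructor; auto.
  - exists (Some A :: X); split; constructor; auto.
Qed.

Fixpoint nones (n : nat) : ctx := match n with 0 => [] | S n => None :: nones n end.

Lemma split_nones G : ctx_split G G (nones (length G)).
Proof. induction G as [|[a|] G IH]; simpl; constructor; auto. Qed.

Definition sub (G G' : ctx) : Prop := Forall2 (fun o o' => o = None \/ o = o') G G'.

Lemma sub_nth G G' n A : sub G G' -> nth_error G n = Some (Some A) -> nth_error G' n = Some (Some A).
Proof.
  intros H; revert n; induction H; intros [|n] Hn; simpl in *; try discriminate; auto.
  inversion Hn; subst. destruct H; congruence.
Qed.

Lemma sub_refl G : sub G G.
Proof. induction G; constructor; auto. Qed.

Lemma split_sub_r G G1 G2 : ctx_split G G1 G2 -> sub G2 G.
Proof. induction 1; constructor; auto. Qed.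

Lemma split_sub_l G G1 G2 : ctx_split G G1 G2 -> sub G1 G.
Proof. induction 1; constructor; auto. Qed.

Lemma split_sub G G1 G2 G' : ctx_split G G1 G2 -> sub G G' ->
  exists G1', ctx_split G' G1' G2 /\ sub G1 G1'.
Proof.
  intros H; revert G'; induction H; intros G' HS; inversion HS; subst.
  - exists []; split; [constructor | apply sub_refl].
  - match goal with Hs : Forall2 _ _ _, IH : forall _, _ -> exists _, _ |- _ =>
      destruct (IH _ Hs) as [X [X1 X2]] end.
    match goal with y : option ty |- _ => destruct y as [B|] end.
    + exists (Some B :: X); split; constructor; auto.
    + exists (None :: X); split; constructor; auto.
  - match goal with Hs : Forall2 _ _ _, IH : forall _, _ -> exists _, _ |- _ =>
      destruct (IH _ Hs) as [X [X1 X2]] end.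
    match goal with H2 : _ \/ _ |- _ => destruct H2 as [H2|H2]; [discriminate|subst] end.
    exists (Some A :: X); split; constructor; auto.
  - match goal with Hs : Forall2 _ _ _, IH : forall _, _ -> exists _, _ |- _ =>
      destruct (IH _ Hs) as [X [X1 X2]] end.
    match goal with H2 : _ \/ _ |- _ => destruct H2 as [H2|H2]; [discriminate|subst] end.
    exists (None :: X); split; constructor; auto.
Qed.

Fixpoint w (t : tm) : nat :=
  match t with
  | tvar _ => 1
  | tlam t => S (w t)
  | tapp t u => S (w t + w u)
  | tone => 1 | tzero => 1 | tcoin => 2
  | tite b u v => S (w b + Nat.max (w u) (w v))
  end.

Fixpoint occ (k : nat) (t : tm) : nat :=
  match t with
  | tvar n => if Nat.eqb n k then 1 else 0
  | tlam t => occ (S k) t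
  | tapp t u => occ k t + occ k u
  | tone | tzero | tcoin => 0
  | tite b u v => occ k b + Nat.max (occ k u) (occ k v)
  end.

Lemma w_shift t c : w (shift c t) = w t.
Proof. revert c; induction t; intros c; simpl; auto; try destruct (Nat.ltb n c); simpl; auto. Qed.

Lemma w_subst t k r : w (subst k r t) <= w t + occ k t * w r.
Proof.
  revert k r; induction t; intros k r; simpl.
  - destruct (Nat.eqb n k); [lia|]. destruct (Nat.ltb k n); simpl; lia.
  - specialize (IHt (S k) (shift 0 r)). rewrite w_shift in IHt. lia.
  - specialize (IHt1 k r). specialize (IHt2 k r). rewrite Nat.mul_add_distr_r. lia.
  - lia.
  - lia.
  - specialize (IHt1 k r). specialize (IHt2 k r). specialize (IHt3 k r).
    rewrite Nat.mul_add_distr_r, <- Nat.mul_max_distr_r. lia.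
  - lia.
Qed.

Definition bnd (G : ctx) (k : nat) : nat :=
  match nth_error G k with Some (Some _) => 1 | _ => 0 end.

Lemma split_bnd G G1 G2 k : ctx_split G G1 G2 -> (bnd G1 k + bnd G2 k <= bnd G k)%nat.
Proof.
  unfold bnd; intros H; revert k; induction H; intros [|k]; simpl; auto; apply IHctx_split.
Qed.

Lemma occ_bound G t A : has_type G t A -> forall k, (occ k t <= bnd G k)%nat.
Proof.
  induction 1; intros k; simpl.
  - destruct (Nat.eqb_spec n k); subst; [unfold bnd; rewrite H|]; lia.
  - apply IHhas_type.
  - specialize (split_bnd _ _ _ k H). specialize (IHhas_type1 k). specialize (IHhas_type2 k). lia.
  - lia.
  - lia.
  - lia.
  - specialize (split_bnd _ _ _ k H). specialize (IHhas_type1 k). specialize (IHhas_type2 k).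
    specialize (IHhas_type3 k). lia.
Qed.

Definition is_value (t : tm) : Prop :=
  match t with tlam _ | tone | tzero => True | _ => False end.

Lemma Forall_map_tm (P : R * tm -> Prop) f L :
  Forall (fun pt => P (fst pt, f (snd pt))) L -> Forall P (map_tm f L).
Proof. intros H; unfold map_tm; apply Forall_map; auto. Qed.

Lemma progress G t A : has_type G t A -> G = [] ->
  is_value t \/ exists L, rstep t L /\ Forall (fun pt => (w (snd pt) < w t)%nat) L.
Proof.
  induction 1; intros E; subst.
  - destruct n; discriminate.
  - left; exact I.
  - inversion H; subst. right. destruct (IHhas_type1 eq_refl) as [HV|[L [HL HF]]].
    + destruct t; simpl in HV; try contradiction; try (inversion H0; fail).
      exists [(1%R, subst 0 r t)]. split; [constructor|]. constructor; [|constructor]. simpl.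
      inversion H0; subst. match goal with Ht : has_type [Some _] t _ |- _ => pose proof (occ_bound _ _ _ Ht 0) as HO end. unfold bnd in HO; simpl in HO.
      pose proof (w_subst t 0 r). assert (occ 0 t * w r <= w r)%nat by nia. lia.
    + exists (map_tm (fun t' => tapp t' r) L). split; [constructor; auto|].
      apply Forall_map_tm. eapply Forall_impl; [|exact HF]. intros [a b]; simpl; lia.
  - left; exact I.
  - left; exact I.
  - right. exists [(/2, tone); (/2, tzero)]%R. split; [constructor|]. repeat constructor.
  - inversion H; subst. right. destruct (IHhas_type1 eq_refl) as [HV|[L [HL HF]]].
    + destruct b; simpl in HV; try contradiction.
      * inversion H0.
      * exists [(1%R, u)]. split; [constructor|]. constructor; [|constructor]; simpl; lia.
      * exists [(1%R, v)]. split; [constructor|]. constructor; [|constructor]; simpl; lia.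
    + exists (map_tm (fun b' => tite b' u v) L). split; [constructor; auto|].
      apply Forall_map_tm. eapply Forall_impl; [|exact HF]. intros [a b']; simpl; lia.
Qed.

Open Scope R_scope.

Record Aff : Type := {
  car : Type;
  cmb : R -> car -> car -> car;
  dflt : car;
  cmb1 : forall x y, cmb 1 x y = x;
  cmb0 : forall x y, cmb 0 x y = y;
  cmb_idem : forall l x, cmb l x x = x;
  cmb_medial : forall l m a b c d, cmb l (cmb m a b) (cmb m c d) = cmb m (cmb l a c) (cmb l b d);
  cmb_weight : forall l p q u v, cmb (l * p + (1 - l) * q) u v = cmb l (cmb p u v) (cmb q u v)
}.

Definition RAff : Aff.
Proof.
  refine {| car := R; cmb := fun l x y => l * x + (1 - l) * y; dflt := 0 |};
  intros; ring.
Defined.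

Definition affmap (X Y : Aff) (f : car X -> car Y) : Prop :=
  forall l x y, f (cmb X l x y) = cmb Y l (f x) (f y).

Lemma sig_ext {T : Type} (P : T -> Prop) (a b : {x : T | P x}) : proj1_sig a = proj1_sig b -> a = b.
Proof.
  destruct a as [a Ha], b as [b Hb]; simpl; intros E; subst. f_equal. apply proof_irrelevance.
Qed.

Definition fcmb (X Y : Aff) (l : R) (F G : {f : car X -> car Y | affmap X Y f}) :
  {f : car X -> car Y | affmap X Y f}.
Proof.
  refine (exist _ (fun v => cmb Y l (proj1_sig F v) (proj1_sig G v)) _).
  intros m x y. destruct F as [F HF], G as [G HG]; simpl. rewrite HF, HG. apply cmb_medial.
Defined.

Definition fdflt (X Y : Aff) : {f : car X -> car Y | affmap X Y f}.
Proof.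
  refine (exist _ (fun _ => dflt Y) _). intros m x y. rewrite cmb_idem. reflexivity.
Defined.

Definition FunAff (X Y : Aff) : Aff.
Proof.
  refine {| car := {f : car X -> car Y | affmap X Y f};
            cmb := fcmb X Y;
            dflt := fdflt X Y |}.
  - intros [F HF] [G HG]; apply sig_ext; simpl; apply functional_extensionality; intros; apply cmb1.
  - intros [F HF] [G HG]; apply sig_ext; simpl; apply functional_extensionality; intros; apply cmb0.
  - intros l [F HF]; apply sig_ext; simpl; apply functional_extensionality; intros; apply cmb_idem.
  - intros l m [F HF] [G HG] [H HH] [K HK]; apply sig_ext; simpl; apply functional_extensionality; intros; apply cmb_medial.
  - intros l p q [F HF] [G HG]; apply sig_ext; simpl; apply functional_extensionality; intros; apply cmb_weight.
Defined.

Fixpoint sp (A : ty) : Aff :=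
  match A with
  | TBool => RAff
  | TArr A B => FunAff (sp A) (sp B)
  end.

Definition ty_eq_dec (A B : ty) : {A = B} + {A <> B}.
Proof. decide equality. Defined.

Definition Val := {A : ty & car (sp A)}.
Definition Env := nat -> Val.

Definition getv (A : ty) (v : Val) : car (sp A) :=
  match ty_eq_dec (projT1 v) A with
  | left e => eq_rect (projT1 v) (fun X => car (sp X)) (projT2 v) A e
  | right _ => dflt (sp A)
  end.

Lemma getv_eq A x : getv A (existT _ A x) = x.
Proof.
  unfold getv; simpl. destruct (ty_eq_dec A A) as [e|n]; [|congruence].
  rewrite (UIP_dec ty_eq_dec e eq_refl). reflexivity.
Qed.

Definition ins (k : nat) (v : Val) (r : Env) : Env :=
  fun n => if Nat.ltb n k then r n else if Nat.eqb n k then v else r (pred n).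
Definition rem (k : nat) (r : Env) : Env :=
  fun n => if Nat.ltb n k then r n else r (S n).
Definition upd (k : nat) (v : Val) (r : Env) : Env :=
  fun n => if Nat.eqb n k then v else r n.
Definition scons (v : Val) (r : Env) : Env := ins 0 v r.

Lemma env_E1 c v r : rem (S c) (scons v r) = scons v (rem c r).
Proof.
  apply functional_extensionality; intros n. unfold rem, scons, ins.
  destruct n; simpl; auto.
  all: destruct (Nat.ltb_spec (S n) (S c)), (Nat.ltb_spec n c); try lia; auto.
Qed.

Lemma env_E2 k X v r : ins (S k) X (scons v r) = scons v (ins k X r).
Proof.
  apply functional_extensionality; intros n. unfold scons, ins.
  destruct n; simpl; auto.
  destruct (Nat.ltb_spec (S n) (S k)), (Nat.ltb_spec n k), (Nat.eqb_spec (S n) (S k)), (Nat.eqb_spec n k);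
    try lia; auto.
  destruct n; simpl; auto. lia.
Qed.

Lemma env_E3 v r : rem 0 (scons v r) = r.
Proof. apply functional_extensionality; intros n. unfold rem, scons, ins. simpl. reflexivity. Qed.

Lemma env_E4 X w r : upd 0 X (scons w r) = scons X r.
Proof. apply functional_extensionality; intros [|n]; reflexivity. Qed.

Lemma env_E5 v n X r : scons v (upd n X r) = upd (S n) X (scons v r).
Proof. apply functional_extensionality; intros [|m]; unfold scons, ins, upd; simpl; auto.
Qed.

Definition appf {A B : ty} (F : car (sp (TArr A B))) (x : car (sp A)) : car (sp B) := proj1_sig F x.

Lemma fun_ext_sp A B (F G : car (sp (TArr A B))) : (forall v, appf F v = appf G v) -> F = G.
Proof. intros H. apply sig_ext. apply functional_extensionality. exact H. Qed.

Definition lam_ok (A B : ty) (f : Env -> car (sp B)) : Prop :=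
  forall r l x y, f (scons (existT _ A (cmb (sp A) l x y)) r) =
                  cmb (sp B) l (f (scons (existT _ A x) r)) (f (scons (existT _ A y) r)).

Definition lamv (A B : ty) (f : Env -> car (sp B)) (H : lam_ok A B f) (r : Env) : car (sp (TArr A B)) :=
  exist (affmap (sp A) (sp B)) (fun v => f (scons (existT _ A v) r)) (H r).

Inductive Sem : ctx -> tm -> forall A : ty, (Env -> car (sp A)) -> Prop :=
| S_var G n A : nth_error G n = Some (Some A) -> Sem G (tvar n) A (fun r => getv A (r n))
| S_lam G t A B f (H : lam_ok A B f) :
    Sem (Some A :: G) t B f -> Sem G (tlam t) (TArr A B) (lamv A B f H)
| S_app G G1 G2 t u A B f g :
    ctx_split G G1 G2 -> Sem G1 t (TArr A B) f -> Sem G2 u A g ->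
    Sem G (tapp t u) B (fun r => appf (f r) (g r))
| S_one G : Sem G tone TBool (fun _ => 1)
| S_zero G : Sem G tzero TBool (fun _ => 0)
| S_coin G : Sem G tcoin TBool (fun _ => /2)
| S_ite G G1 G2 b u v A fb fu fv :
    ctx_split G G1 G2 -> Sem G1 b TBool fb -> Sem G2 u A fu -> Sem G2 v A fv ->
    Sem G (tite b u v) A (fun r => cmb (sp A) (fb r) (fu r) (fv r)).

Lemma Sem_ext G t A f f' : Sem G t A f -> (forall r, f r = f' r) -> Sem G t A f'.
Proof. intros H E. replace f' with f; auto. apply functional_extensionality; auto. Qed.

Lemma Sem_typed G t A f : Sem G t A f -> has_type G t A.
Proof. induction 1; econstructor; eauto. Qed.

Ltac inj := repeat match goal with H : existT _ _ _ = existT _ _ _ |- _ =>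
  apply (inj_pair2_eq_dec _ ty_eq_dec) in H end.

Lemma Sem_weak G t A f : Sem G t A f -> forall G', sub G G' -> Sem G' t A f.
Proof.
  induction 1; intros G' HS.
  - constructor. eapply sub_nth; eauto.
  - constructor. apply IHSem. constructor; auto.
  - destruct (split_sub _ _ _ _ H HS) as [G1' [Hs1 Hs2]]. econstructor; eauto.
  - constructor.
  - constructor.
  - constructor.
  - destruct (split_sub _ _ _ _ H HS) as [G1' [Hs1 Hs2]]. econstructor; eauto.
Qed.

Definition dep (G : ctx) {A} (f : Env -> car (sp A)) : Prop :=
  forall r r', (forall n B, nth_error G n = Some (Some B) -> r n = r' n) -> f r = f r'.

Definition affk (G : ctx) {A} (f : Env -> car (sp A)) : Prop :=
  forall n B, nth_error G n = Some (Some B) -> forall r l x y,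
    f (upd n (existT _ B (cmb (sp B) l x y)) r) =
    cmb (sp A) l (f (upd n (existT _ B x) r)) (f (upd n (existT _ B y) r)).

Lemma upd_other n m X r : n <> m -> upd m X r n = r n.
Proof. intros H; unfold upd. destruct (Nat.eqb_spec n m); congruence. Qed.

Lemma upd_same n X r : upd n X r n = X.
Proof. unfold upd. rewrite Nat.eqb_refl. auto. Qed.

Lemma dep_upd G A (f : Env -> car (sp A)) n X r : dep G f -> nth_error G n = Some None -> f (upd n X r) = f r.
Proof.
  intros D Hn. apply D. intros m B Hm. apply upd_other. intros ->. congruence.
Qed.

Lemma Sem_props G t A f : Sem G t A f -> dep G f /\ affk G f.
Proof.
  induction 1.
  - split.
    + intros r r' E. simpl. rewrite (E n A H). auto.
    + intros m B Hm r l x y. destruct (Nat.eqb_spec n m).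
      * subst. rewrite H in Hm. inversion Hm; subst. rewrite !upd_same, !getv_eq. auto.
      * rewrite !upd_other by auto. rewrite cmb_idem. auto.
  - destruct IHSem as [D AF]. split.
    + intros r r' E. apply fun_ext_sp. intros v. unfold appf, lamv; simpl. apply D.
      intros [|m] B' Hm; simpl in Hm; unfold scons, ins; simpl; auto. eapply E; eauto.
    + intros m B' Hm r l x y. apply fun_ext_sp. intros v. unfold appf, lamv; simpl.
      rewrite !env_E5. apply (AF (S m) B' Hm).
  - destruct IHSem1 as [D1 A1], IHSem2 as [D2 A2]. split.
    + intros r r' E. rewrite (D1 r r'), (D2 r r'); auto.
      * intros m B' Hm. destruct (split_r _ _ _ _ _ H Hm). eauto.
      * intros m B' Hm. destruct (split_l _ _ _ _ _ H Hm). eauto.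
    + intros m B' Hm r l x y. destruct (split_G _ _ _ _ _ H Hm) as [[Hm1 Hm2]|[Hm2 Hm1]].
      * rewrite !(dep_upd _ _ g m _ r D2 Hm2). rewrite (A1 m B' Hm1). reflexivity.
      * rewrite !(dep_upd _ _ f m _ r D1 Hm1). rewrite (A2 m B' Hm2). unfold appf.
        apply (proj2_sig (f r)).
  - split; [intros r r' _; auto | intros n0 B0 Hn0 r l x y; exact (eq_sym (cmb_idem (sp TBool) _ _))].
  - split; [intros r r' _; auto | intros n0 B0 Hn0 r l x y; exact (eq_sym (cmb_idem (sp TBool) _ _))].
  - split; [intros r r' _; auto | intros n0 B0 Hn0 r l x y; exact (eq_sym (cmb_idem (sp TBool) _ _))].
  - destruct IHSem1 as [D1 A1], IHSem2 as [D2 A2], IHSem3 as [D3 A3]. split.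
    + intros r r' E. rewrite (D1 r r'), (D2 r r'), (D3 r r'); auto.
      * intros m B' Hm. destruct (split_r _ _ _ _ _ H Hm). eauto.
      * intros m B' Hm. destruct (split_r _ _ _ _ _ H Hm). eauto.
      * intros m B' Hm. destruct (split_l _ _ _ _ _ H Hm). eauto.
    + intros m B' Hm r l x y. destruct (split_G _ _ _ _ _ H Hm) as [[Hm1 Hm2]|[Hm2 Hm1]].
      * rewrite !(dep_upd _ _ fu m _ r D2 Hm2), !(dep_upd _ _ fv m _ r D3 Hm2).
        rewrite (A1 m B' Hm1). simpl. rewrite cmb_weight. reflexivity.
      * rewrite !(dep_upd _ _ fb m _ r D1 Hm1).
        rewrite (A2 m B' Hm2), (A3 m B' Hm2). apply cmb_medial.
Qed.


Lemma affk_lam_ok G A B (f : Env -> car (sp B)) : affk (Some A :: G) f -> lam_ok A B f.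
Proof.
  intros AF r l x y. pose proof (AF 0%nat A eq_refl (scons (existT _ A x) r) l x y) as E.
  rewrite !env_E4 in E. exact E.
Qed.

Lemma Sem_exists G t A : has_type G t A -> exists f, Sem G t A f.
Proof.
  induction 1.
  - eexists; constructor; eauto.
  - destruct IHhas_type as [f Hf]. pose proof (affk_lam_ok _ _ _ _ (proj2 (Sem_props _ _ _ _ Hf))) as HL.
    exists (lamv A B f HL); constructor; auto.
  - destruct IHhas_type1 as [f Hf], IHhas_type2 as [g Hg]. eexists; econstructor; eauto.
  - eexists; constructor.
  - eexists; constructor.
  - eexists; constructor.
  - destruct IHhas_type1 as [f Hf], IHhas_type2 as [g Hg], IHhas_type3 as [h Hh]. eexists; econstructor; eauto.
Qed.

Open Scope R_scope.


Lemma lam_ok_Sem G t A B f : Sem (Some A :: G) t B f -> lam_ok A B f.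
Proof. intros H. apply (affk_lam_ok G). apply (proj2 (Sem_props _ _ _ _ H)). Qed.

Lemma Sem_shift G t A f : Sem G t A f -> forall c, (c <= length G)%nat ->
  Sem (insl c None G) (shift c t) A (fun r => f (rem c r)).
Proof.
  induction 1; intros c Hc.
  - simpl. destruct (Nat.ltb_spec n c).
    + eapply Sem_ext. constructor. rewrite nth_insl by auto.
      destruct (Nat.ltb_spec n c); [|lia]. eauto.
      intros r. unfold rem. destruct (Nat.ltb_spec n c); [|lia]. auto.
    + eapply Sem_ext. constructor. rewrite nth_insl by auto.
      destruct (Nat.ltb_spec (S n) c); [lia|]. destruct (Nat.eqb_spec (S n) c); [lia|]. simpl. eauto.
      intros r. unfold rem. destruct (Nat.ltb_spec n c); [lia|]. auto.
  - simpl. specialize (IHSem (S c) ltac:(simpl; lia)). simpl in IHSem.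
    pose proof (lam_ok_Sem _ _ _ _ _ IHSem) as HL.
    apply (Sem_ext _ _ _ (lamv A B (fun r => f (rem (S c) r)) HL)). constructor; exact IHSem.
    intros r. apply fun_ext_sp. intros v. unfold appf, lamv; simpl. rewrite env_E1. auto.
  - destruct (split_len _ _ _ H) as [L1 L2].
    apply (S_app _ (insl c None G1) (insl c None G2) _ _ A B (fun r => f (rem c r)) (fun r => g (rem c r))).
    apply split_ins; auto. apply IHSem1; lia. apply IHSem2; lia.
  - apply (Sem_ext _ _ _ _ _ (S_one _)); auto.
  - apply (Sem_ext _ _ _ _ _ (S_zero _)); auto.
  - apply (Sem_ext _ _ _ _ _ (S_coin _)); auto.
  - destruct (split_len _ _ _ H) as [L1 L2].
    apply (S_ite _ (insl c None G1) (insl c None G2) _ _ _ A (fun r => fb (rem c r)) (fun r => fu (rem c r)) (fun r => fv (rem c r))).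
    apply split_ins; auto. apply IHSem1; lia. apply IHSem2; lia. apply IHSem3; lia.
Qed.

Lemma Sem_subst G' t B f : Sem G' t B f -> forall k o G1 G2 G0 A u g,
  G' = insl k o G1 -> (k <= length G1)%nat -> ctx_split G0 G1 G2 ->
  (o = None \/ (o = Some A /\ Sem G2 u A g)) ->
  Sem G0 (subst k u t) B (fun r => f (ins k (existT _ A (g r)) r)).
Proof.
  induction 1; intros k o G1' G2' G0 A' w0 h EG Hk HS Ho; subst.
  - rename A into B. rewrite nth_insl in H by auto. simpl.
    destruct (Nat.ltb_spec n k).
    + destruct (Nat.eqb_spec n k); [lia|]. destruct (Nat.ltb_spec k n); [lia|].
      eapply Sem_ext. constructor. apply (split_l _ _ _ _ _ HS H).
      intros r. unfold ins. destruct (Nat.ltb_spec n k); [|lia]. auto.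
    + destruct (Nat.eqb_spec n k).
      * subst. inversion H; subst.
        destruct Ho as [Ho|[Ho HU]]; [discriminate|]. inversion Ho; subst.
        eapply Sem_ext. eapply Sem_weak. exact HU. eapply split_sub_r; eauto.
        intros r. unfold ins. rewrite Nat.ltb_irrefl, Nat.eqb_refl. rewrite getv_eq. auto.
      * destruct (Nat.eqb_spec n k); [lia|]. destruct (Nat.ltb_spec k n); [|lia].
        eapply Sem_ext. constructor. apply (split_l _ _ _ _ _ HS H).
        intros r. unfold ins. destruct (Nat.ltb_spec n k); [lia|]. destruct (Nat.eqb_spec n k); [lia|]. auto.
  - simpl.
    assert (IH := IHSem (S k) o (Some A :: G1') (None :: G2') (Some A :: G0) A' (shift 0 w0) (fun r => h (rem 0 r))
                    eq_refl ltac:(simpl; lia) ltac:(constructor; auto)).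
    assert (IH' : Sem (Some A :: G0) (subst (S k) (shift 0 w0) t) B
              (fun r => f (ins (S k) (existT _ A' (h (rem 0 r))) r))).
    { apply IH. destruct Ho as [Ho|[Ho HU]]; [left; auto|right; split; auto].
      apply (Sem_shift _ _ _ _ HU 0); lia. }
    pose proof (lam_ok_Sem _ _ _ _ _ IH') as HL.
    apply (Sem_ext _ _ _ (lamv A B (fun r => f (ins (S k) (existT _ A' (h (rem 0%nat r))) r)) HL)).
    constructor; exact IH'.
    intros r. apply fun_ext_sp. intros v. unfold appf, lamv; simpl. rewrite env_E3, env_E2. auto.
  - simpl. destruct (split_ins_inv _ _ _ _ _ H Hk) as (Ha & Hb & oa & ob & E1 & E2 & HS' & HO); subst.
    destruct (split_len _ _ _ HS') as [La Lb].
    destruct HO as [(-> & -> & ->)|[(A0 & -> & -> & ->)|(A0 & -> & -> & ->)]].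
    + eapply Sem_weak; [|eapply split_sub_l; eauto].
      apply (S_app _ Ha Hb _ _ A B (fun r => f (ins k (existT _ A' (h r)) r)) (fun r => g (ins k (existT _ A' (h r)) r))); auto.
      * apply (IHSem1 k None Ha (nones (length Ha)) Ha A' w0 h); auto; try lia. apply split_nones.
      * apply (IHSem2 k None Hb (nones (length Hb)) Hb A' w0 h); auto; try lia. apply split_nones.
    + destruct (split_assoc _ _ _ _ _ HS HS') as [G0a [X1 X2]].
      apply (S_app _ G0a Hb _ _ A B (fun r => f (ins k (existT _ A' (h r)) r)) (fun r => g (ins k (existT _ A' (h r)) r))); auto.
      * apply (IHSem1 k (Some A0) Ha G2' G0a A' w0 h); auto; try lia.
      * apply (IHSem2 k None Hb (nones (length Hb)) Hb A' w0 h); auto; try lia. apply split_nones.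
    + destruct (split_assoc _ _ _ _ _ HS (split_sym _ _ _ HS')) as [G0b [X1 X2]].
      apply (S_app _ Ha G0b _ _ A B (fun r => f (ins k (existT _ A' (h r)) r)) (fun r => g (ins k (existT _ A' (h r)) r))); auto.
      * apply split_sym; auto.
      * apply (IHSem1 k None Ha (nones (length Ha)) Ha A' w0 h); auto; try lia. apply split_nones.
      * apply (IHSem2 k (Some A0) Hb G2' G0b A' w0 h); auto; try lia.
  - apply (Sem_ext _ _ _ _ _ (S_one _)); auto.
  - apply (Sem_ext _ _ _ _ _ (S_zero _)); auto.
  - apply (Sem_ext _ _ _ _ _ (S_coin _)); auto.
  - simpl. destruct (split_ins_inv _ _ _ _ _ H Hk) as (Ha & Hb & oa & ob & E1 & E2 & HS' & HO); subst.
    destruct (split_len _ _ _ HS') as [La Lb].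
    destruct HO as [(-> & -> & ->)|[(A0 & -> & -> & ->)|(A0 & -> & -> & ->)]].
    + eapply Sem_weak; [|eapply split_sub_l; eauto].
      apply (S_ite _ Ha Hb _ _ _ A (fun r => fb (ins k (existT _ A' (h r)) r))
               (fun r => fu (ins k (existT _ A' (h r)) r)) (fun r => fv (ins k (existT _ A' (h r)) r))); auto.
      * apply (IHSem1 k None Ha (nones (length Ha)) Ha A' w0 h); auto; try lia. apply split_nones.
      * apply (IHSem2 k None Hb (nones (length Hb)) Hb A' w0 h); auto; try lia. apply split_nones.
      * apply (IHSem3 k None Hb (nones (length Hb)) Hb A' w0 h); auto; try lia. apply split_nones.
    + destruct (split_assoc _ _ _ _ _ HS HS') as [G0a [X1 X2]].
      apply (S_ite _ G0a Hb _ _ _ A (fun r => fb (ins k (existT _ A' (h r)) r))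
               (fun r => fu (ins k (existT _ A' (h r)) r)) (fun r => fv (ins k (existT _ A' (h r)) r))); auto.
      * apply (IHSem1 k (Some A0) Ha G2' G0a A' w0 h); auto; try lia.
      * apply (IHSem2 k None Hb (nones (length Hb)) Hb A' w0 h); auto; try lia. apply split_nones.
      * apply (IHSem3 k None Hb (nones (length Hb)) Hb A' w0 h); auto; try lia. apply split_nones.
    + destruct (split_assoc _ _ _ _ _ HS (split_sym _ _ _ HS')) as [G0b [X1 X2]].
      apply (S_ite _ Ha G0b _ _ _ A (fun r => fb (ins k (existT _ A' (h r)) r))
               (fun r => fu (ins k (existT _ A' (h r)) r)) (fun r => fv (ins k (existT _ A' (h r)) r))); auto.
      * apply split_sym; auto.
      * apply (IHSem1 k None Ha (nones (length Ha)) Ha A' w0 h); auto; try lia. apply split_nones.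
      * apply (IHSem2 k (Some A0) Hb G2' G0b A' w0 h); auto; try lia.
      * apply (IHSem3 k (Some A0) Hb G2' G0b A' w0 h); auto; try lia.
Qed.

Open Scope R_scope.

Lemma inv_app G t u B F : Sem G (tapp t u) B F -> exists G1 G2 A f g,
  ctx_split G G1 G2 /\ Sem G1 t (TArr A B) f /\ Sem G2 u A g /\ forall r, F r = appf (f r) (g r).
Proof. intros H; inversion H; subst; inj; subst. exists G1, G2, A, f, g; repeat split; auto. Qed.

Lemma inv_lam G t A B F : Sem G (tlam t) (TArr A B) F -> exists f (H : lam_ok A B f),
  Sem (Some A :: G) t B f /\ forall r, F r = lamv A B f H r.
Proof. intros H; inversion H; subst; inj; subst. eexists; eexists; split; [eassumption|]; auto. Qed.

Lemma inv_lam_bool G t F : Sem G (tlam t) TBool F -> False.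
Proof. intros H; inversion H. Qed.

Lemma inv_ite G b u v A F : Sem G (tite b u v) A F -> exists G1 G2 fb fu fv,
  ctx_split G G1 G2 /\ Sem G1 b TBool fb /\ Sem G2 u A fu /\ Sem G2 v A fv /\
  forall r, F r = cmb (sp A) (fb r) (fu r) (fv r).
Proof. intros H; inversion H; subst; inj; subst. exists G1, G2, fb, fu, fv; repeat split; auto. Qed.

Lemma inv_one G A F : Sem G tone A F -> A = TBool.
Proof. intros H; inversion H; auto. Qed.
Lemma inv_one' G F : Sem G tone TBool F -> forall r, F r = 1.
Proof. intros H; inversion H; subst; inj; subst; auto. Qed.
Lemma inv_zero G A F : Sem G tzero A F -> A = TBool.
Proof. intros H; inversion H; auto. Qed.
Lemma inv_zero' G F : Sem G tzero TBool F -> forall r, F r = 0.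
Proof. intros H; inversion H; subst; inj; subst; auto. Qed.
Lemma inv_coin G A F : Sem G tcoin A F -> A = TBool.
Proof. intros H; inversion H; auto. Qed.
Lemma inv_coin' G F : Sem G tcoin TBool F -> forall r, F r = /2.
Proof. intros H; inversion H; subst; inj; subst; auto. Qed.

Lemma cmb_l X p l a b v : cmb X p (cmb X l a b) v = cmb X l (cmb X p a v) (cmb X p b v).
Proof.
  transitivity (cmb X p (cmb X l a b) (cmb X l v v)); [rewrite (cmb_idem X l v); auto | apply cmb_medial].
Qed.

Lemma cmb_r X p l a b v : cmb X p v (cmb X l a b) = cmb X l (cmb X p v a) (cmb X p v b).
Proof.
  transitivity (cmb X p (cmb X l v v) (cmb X l a b)); [rewrite (cmb_idem X l v); auto | apply cmb_medial].
Qed.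

Definition step_sem G A (f : Env -> car (sp A)) (L : distr) : Prop :=
  (exists t', L = [(1, t')] /\ Sem G t' A f) \/
  (exists a b fa fb, L = [(/2, a); (/2, b)] /\ Sem G a A fa /\ Sem G b A fb /\
     forall r, f r = cmb (sp A) (/2) (fa r) (fb r)).

Lemma sem_step t L : rstep t L -> forall G A f, Sem G t A f -> step_sem G A f L.
Proof.
  induction 1; intros G T F HS.
  -
    destruct (inv_app _ _ _ _ _ HS) as (G1 & G2 & A & f1 & g & HSp & H1 & H2 & E).
    destruct (inv_lam _ _ _ _ _ H1) as (f0 & HL & H0 & E0).
    left. exists (subst 0 r t). split; auto.
    eapply Sem_ext.
    + apply (Sem_subst _ _ _ _ H0 0%nat (Some A) G1 G2 G A r g); auto; lia.
    + intros rr. rewrite E, E0. reflexivity.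
  - destruct (inv_ite _ _ _ _ _ _ HS) as (G1 & G2 & fb & fu & fv & HSp & Hb & Hu & Hv & E).
    left. exists t. split; auto. eapply Sem_ext. eapply Sem_weak. exact Hu. eapply split_sub_r; eauto.
    intros rr. rewrite E, (inv_one' _ _ Hb). rewrite cmb1. auto.
  - destruct (inv_ite _ _ _ _ _ _ HS) as (G1 & G2 & fb & fu & fv & HSp & Hb & Hu & Hv & E).
    left. exists u. split; auto. eapply Sem_ext. eapply Sem_weak. exact Hv. eapply split_sub_r; eauto.
    intros rr. rewrite E, (inv_zero' _ _ Hb). rewrite cmb0. auto.
  - pose proof (inv_coin _ _ _ HS); subst. right.
    exists tone, tzero, (fun _ => 1), (fun _ => 0). repeat split; try constructor.
    intros rr. rewrite (inv_coin' _ _ HS). simpl. field.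
  - destruct T as [|A B]; [exfalso; eapply inv_lam_bool; eauto|].
    destruct (inv_lam _ _ _ _ _ HS) as (f0 & HL & H0 & E0).
    destruct (IHrstep _ _ _ H0) as [(t' & -> & Ht')|(a & b & fa & fb & -> & Ha & Hb & Ef)].
    + left. exists (tlam t'). split; auto. eapply Sem_ext. constructor; exact Ht'. intros; rewrite E0; auto.
    + right. exists (tlam a), (tlam b), (lamv A B fa (lam_ok_Sem _ _ _ _ _ Ha)), (lamv A B fb (lam_ok_Sem _ _ _ _ _ Hb)).
      repeat split; try constructor; auto.
      intros rr. rewrite E0. apply fun_ext_sp. intros v. unfold appf, lamv; simpl. rewrite Ef. reflexivity.
  - destruct (inv_app _ _ _ _ _ HS) as (G1 & G2 & A & f1 & g & HSp & H1 & H2 & E).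
    destruct (IHrstep _ _ _ H1) as [(t' & -> & Ht')|(a & b & fa & fb & -> & Ha & Hb & Ef)].
    + left. exists (tapp t' u). split; auto. eapply Sem_ext. econstructor; eauto. intros; rewrite E; auto.
    + right. exists (tapp a u), (tapp b u), (fun rr => appf (fa rr) (g rr)), (fun rr => appf (fb rr) (g rr)).
      repeat split; try (econstructor; eauto).
      intros rr. rewrite E, Ef. reflexivity.
  - destruct (inv_app _ _ _ _ _ HS) as (G1 & G2 & A & f1 & g & HSp & H1 & H2 & E).
    destruct (IHrstep _ _ _ H2) as [(t' & -> & Ht')|(a & b & fa & fb & -> & Ha & Hb & Ef)].
    + left. exists (tapp t t'). split; auto. eapply Sem_ext. econstructor; eauto. intros; rewrite E; auto.
    + right. exists (tapp t a), (tapp t b), (fun rr => appf (f1 rr) (fa rr)), (fun rr => appf (f1 rr) (fb rr)).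
      repeat split; try (econstructor; eauto).
      intros rr. rewrite E, Ef. unfold appf. apply (proj2_sig (f1 rr)).
  - destruct (inv_ite _ _ _ _ _ _ HS) as (G1 & G2 & fb & fu & fv & HSp & Hb & Hu & Hv & E).
    destruct (IHrstep _ _ _ Hb) as [(t' & -> & Ht')|(a & b' & fa & fb' & -> & Ha & Hb' & Ef)].
    + left. eexists. split; [reflexivity|]. eapply Sem_ext. econstructor; eauto. intros; rewrite E; auto.
    + right. exists (tite a t u), (tite b' t u), (fun rr => cmb (sp T) (fa rr) (fu rr) (fv rr)),
        (fun rr => cmb (sp T) (fb' rr) (fu rr) (fv rr)).
      repeat split; try (econstructor; eauto).
      intros rr. rewrite E, Ef. exact (cmb_weight (sp T) _ _ _ _ _).
  - destruct (inv_ite _ _ _ _ _ _ HS) as (G1 & G2 & fb & fu & fv & HSp & Hb & Hu & Hv & E).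
    destruct (IHrstep _ _ _ Hu) as [(t' & -> & Ht')|(a & b' & fa & fb' & -> & Ha & Hb' & Ef)].
    + left. eexists. split; [reflexivity|]. eapply Sem_ext. econstructor; eauto. intros; rewrite E; auto.
    + right. exists (tite b a u), (tite b b' u), (fun rr => cmb (sp T) (fb rr) (fa rr) (fv rr)),
        (fun rr => cmb (sp T) (fb rr) (fb' rr) (fv rr)).
      repeat split; try (econstructor; eauto).
      intros rr. rewrite E, Ef. apply cmb_l.
  - destruct (inv_ite _ _ _ _ _ _ HS) as (G1 & G2 & fb & fu & fv & HSp & Hb & Hu & Hv & E).
    destruct (IHrstep _ _ _ Hv) as [(t' & -> & Ht')|(a & b' & fa & fb' & -> & Ha & Hb' & Ef)].
    + left. eexists. split; [reflexivity|]. eapply Sem_ext. econstructor; eauto. intros; rewrite E; auto.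
    + right. exists (tite b t a), (tite b t b'), (fun rr => cmb (sp T) (fb rr) (fu rr) (fa rr)),
        (fun rr => cmb (sp T) (fb rr) (fu rr) (fb' rr)).
      repeat split; try (econstructor; eauto).
      intros rr. rewrite E, Ef. apply cmb_r.
Qed.

Lemma subject_red G t A L : has_type G t A -> rstep t L -> Forall (fun pt => has_type G (snd pt) A) L.
Proof.
  intros HT HR. destruct (Sem_exists _ _ _ HT) as [f Hf].
  destruct (sem_step _ _ HR _ _ _ Hf) as [(t' & -> & H)|(a & b & fa & fb & -> & Ha & Hb & _)].
  - constructor; [|constructor]. eapply Sem_typed; eauto.
  - constructor; [|constructor; [|constructor]]; simpl; eapply Sem_typed; eauto.
Qed.

Open Scope R_scope.

Lemma normalize n : forall t A, (w t < n)%nat -> has_type [] t A ->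
  exists N, dstar [(1, t)] N /\ Forall (fun pt => has_type [] (snd pt) A /\ is_value (snd pt)) N.
Proof.
  induction n; intros t A Hw HT; [lia|].
  destruct (progress _ _ _ HT eq_refl) as [HV|[L [HL HF]]].
  - exists [(1, t)]. split; [constructor|]. constructor; auto.
  - pose proof (subject_red _ _ _ _ HT HL) as HTL.
    assert (HD : dstep [(1, t)] (map (fun qt => (1 * fst qt, snd qt)) L)).
    { pose proof (ds_intro [] [] 1 t L HL) as X. simpl in X. rewrite app_nil_r in X. exact X. }
    destruct (dstar_combine (fun s => has_type [] s A /\ is_value s) (map (fun qt => (1 * fst qt, snd qt)) L))
      as [E [HE HQ]].
    + apply Forall_map. rewrite Forall_forall in HF, HTL |- *. intros [q tj] Hin. simpl.
      apply IHn. specialize (HF _ Hin); simpl in HF; lia. apply (HTL _ Hin).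
    + exists E. split; auto. econstructor; eauto.
Qed.

Lemma value_bool t : has_type [] t TBool -> is_value t -> t = tone \/ t = tzero.
Proof. intros H HV; destruct t; simpl in HV; try contradiction; auto. inversion H. Qed.

Lemma normal_tone : normal tone.
Proof. intros p r [L [H _]]. inversion H. Qed.
Lemma normal_tzero : normal tzero.
Proof. intros p r [L [H _]]. inversion H. Qed.

Definition rho0 : Env := fun _ => existT _ TBool (0 : car (sp TBool)).

Inductive DS : distr -> R -> Prop :=
| DS_nil : DS [] 0
| DS_cons p t D g x : Sem [] t TBool g -> DS D x -> DS ((p, t) :: D) (p * g rho0 + x).

Lemma DS_eq D x y : DS D x -> x = y -> DS D y.
Proof. intros H ->; auto. Qed.

Lemma DS_app D1 D2 x1 x2 : DS D1 x1 -> DS D2 x2 -> DS (D1 ++ D2) (x1 + x2).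
Proof.
  induction 1; intros H2; simpl.
  - eapply DS_eq; eauto. ring.
  - eapply DS_eq. econstructor; eauto. ring.
Qed.

Lemma DS_app_inv D1 D2 x : DS (D1 ++ D2) x -> exists x1 x2, DS D1 x1 /\ DS D2 x2 /\ x = x1 + x2.
Proof.
  revert x; induction D1 as [|[p t] D1 IH]; intros x H; simpl in H.
  - exists 0, x. repeat split; auto. constructor. ring.
  - inversion H; subst. destruct (IH _ H5) as (x1 & x2 & A1 & A2 & E).
    exists (p * g rho0 + x1), x2. repeat split; auto. constructor; auto. subst; ring.
Qed.

Lemma DS_scale p D x : DS D x -> DS (map (fun qt => (p * fst qt, snd qt)) D) (p * x).
Proof.
  induction 1; simpl.
  - eapply DS_eq; [constructor|]. ring.
  - eapply DS_eq; [econstructor; eauto|]. ring.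
Qed.

Lemma DS_step D D' x : dstep D D' -> DS D x -> DS D' x.
Proof.
  intros H HD; inversion H; subst.
  destruct (DS_app_inv _ _ _ HD) as (x1 & x2 & A1 & A2 & E). inversion A2 as [|p' t' D' g x' Hg HD' Ex]; subst.
  destruct (sem_step _ _ H0 _ _ _ Hg) as [(t' & -> & Ht')|(a & b & fa & fb & -> & Ha & Hb & Ef)].
  - simpl. eapply DS_eq. apply DS_app; [exact A1|]. econstructor; eauto. ring.
  - simpl. eapply DS_eq. apply DS_app; [exact A1|]. econstructor; [exact Ha|]. econstructor; [exact Hb|]. exact HD'.
    rewrite (Ef rho0). simpl. field.
Qed.

Lemma DS_star D D' x : dstar D D' -> DS D x -> DS D' x.
Proof. induction 1; auto. intros; apply IHdstar. eapply DS_step; eauto. Qed.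

Lemma DS_values E x : DS E x -> Forall (fun pt => snd pt = tone \/ snd pt = tzero) E -> x = mass E tone.
Proof.
  induction 1; intros HF; simpl; auto.
  inversion HF; subst. simpl in H3. rewrite <- IHDS; auto.
  destruct H3 as [->| ->].
  - rewrite (inv_one' _ _ H). destruct (tm_eq_dec tone tone); [ring|congruence].
  - rewrite (inv_zero' _ _ H). destruct (tm_eq_dec tzero tone); [discriminate|ring].
Qed.

Lemma DS_nf C D E : nf_expand C D E -> forall x, DS (map_tm (plug C) D) x -> DS E x.
Proof.
  induction 1; intros x HD; simpl in HD.
  - inversion HD; constructor.
  - inversion HD; subst.
    assert (X : DS [(1, plug C t)] (1 * g rho0 + 0)) by (econstructor; eauto; constructor).
    apply (DS_star _ _ _ H) in X. apply (DS_scale p) in X.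
    eapply DS_eq. apply DS_app; [exact X| apply IHnf_expand; eauto]. ring.
Qed.

Lemma build_E C A D : elim_ctx_of A C -> Forall (fun pt => has_type [] (snd pt) A) D ->
  exists E, nf_expand C D E /\ Forall (fun pt => snd pt = tone \/ snd pt = tzero) E /\ tot E = tot D.
Proof.
  intros HC; induction D as [|[p t] D IH]; intros HF.
  - exists []. repeat split; constructor.
  - inversion HF; subst. destruct (IH H2) as (E & HE & HQ & HT).
    assert (HTy : has_type [] (plug C t) TBool) by (apply (proj2 HC); auto).
    destruct (normalize (S (w (plug C t))) (plug C t) TBool (Nat.lt_succ_diag_r _) HTy) as [N [HN HNF]].
    assert (HNB : Forall (fun pt => snd pt = tone \/ snd pt = tzero) N).
    { eapply Forall_impl; [|exact HNF]. intros [a b] [X1 X2]; apply value_bool; auto. }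
    exists (map (fun ub => (p * fst ub, snd ub)) N ++ E). repeat split.
    + constructor; auto. eapply Forall_impl; [|exact HNB]. intros [a b] [-> | ->]; simpl.
      apply normal_tone. apply normal_tzero.
    + apply Forall_app; split; auto. apply Forall_map. eapply Forall_impl; [|exact HNB]. intros [a b]; simpl; auto.
    + rewrite tot_app, tot_scale, HT. rewrite (tot_dstar _ _ HN). simpl. ring.
Qed.

Lemma dstar_typed A D D' : dstar D D' -> Forall (fun pt => has_type [] (snd pt) A) D ->
  Forall (fun pt => has_type [] (snd pt) A) D'.
Proof.
  induction 1 as [|D D' D'' HS _ IH]; intros HF; auto. apply IH. inversion HS as [X1 X2 p t L HR]; subst.
  apply Forall_app in HF as [F1 F2]. inversion F2 as [|x l Ht F3]; subst.
  apply Forall_app; split; auto. apply Forall_app; split; auto.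
  apply Forall_map. pose proof (subject_red _ _ _ _ Ht HR) as X.
  eapply Forall_impl; [|exact X]. intros [a b]; simpl; auto.
Qed.

Lemma mass_bool E : Forall (fun pt => snd pt = tone \/ snd pt = tzero) E ->
  mass E tone + mass E tzero = tot E /\ (forall s, s <> tone -> s <> tzero -> mass E s = 0).
Proof.
  induction E as [|[p t] E IH]; intros HF; simpl.
  - split; [ring|auto].
  - inversion HF; subst. destruct (IH H2) as [IH1 IH2]. simpl in H1. split.
    + destruct H1 as [-> | ->]; destruct (tm_eq_dec tone tone); destruct (tm_eq_dec tone tzero); try discriminate;
        destruct (tm_eq_dec tzero tone); destruct (tm_eq_dec tzero tzero); try discriminate; try congruence; lra.
    + intros s N1 N2. rewrite IH2 by auto. destruct (tm_eq_dec t s); [|ring].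
      subst; destruct H1; congruence.
Qed.

Theorem theorem1 (t : tm) (A : ty) (D1 D2 : distr) :
  has_type nil t A -> reduces t D1 -> reduces t D2 -> comp_equiv A D1 D2.
Proof.
  intros HT R1 R2.
  assert (F1 : Forall (fun pt => has_type [] (snd pt) A) D1) by (eapply dstar_typed; eauto).
  assert (F2 : Forall (fun pt => has_type [] (snd pt) A) D2) by (eapply dstar_typed; eauto).
  split; [auto|split; [auto|]].
  intros C HC.
  destruct (build_E C A D1 HC F1) as (E1 & HE1 & HB1 & HT1).
  destruct (build_E C A D2 HC F2) as (E2 & HE2 & HB2 & HT2).
  exists E1, E2. split; [auto|split; [auto|]].
  assert (HTy : has_type [] (plug C t) TBool) by (apply (proj2 HC); auto).
  destruct (Sem_exists _ _ _ HTy) as [g Hg].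
  assert (X : DS [(1, plug C t)] (1 * g rho0 + 0)) by (econstructor; eauto; constructor).
  assert (X1 := DS_nf _ _ _ HE1 _ (DS_star _ _ _ (dstar_plug C _ _ R1) X)).
  assert (X2 := DS_nf _ _ _ HE2 _ (DS_star _ _ _ (dstar_plug C _ _ R2) X)).
  apply DS_values in X1; auto. apply DS_values in X2; auto.
  pose proof (tot_dstar _ _ R1) as T1. pose proof (tot_dstar _ _ R2) as T2.
  destruct (mass_bool _ HB1) as [M1 Z1]. destruct (mass_bool _ HB2) as [M2 Z2].
  intros s. destruct (tm_eq_dec s tone) as [->|N1].
  - congruence.
  - destruct (tm_eq_dec s tzero) as [->|N2].
    + simpl in T1, T2. lra.
    + rewrite Z1, Z2; auto.
Qed.
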